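(* For every $\theta\in[-\pi,\pi]^d\setminus\{0\}$, the spectral radius of the complex matrix $\widehat{\mu}(\theta)$ is strictly smaller than $1$.
   Context: Fix integers $d,p\ge 1$. Let $(Z_n)=(A_n,M_n)$ be a Markov-additive process on $\mathbb{Z}^d\times\{1,\dots,p\}$, i.e. a Markov chain with $\mathbb{P}_{(x,i)}((A_1,M_1)=(x',i'))=\mathbb{P}_{(0,i)}((A_1,M_1)=(x'-x,i'))$ for all $x,x',i,i'$, with jump matrix of sub-probability measures $\mu_{i,j}(x)=\mathbb{P}_{(0,i)}((A_1,M_1)=(x,j))$. It is assumed irreducible, aperiodic (for every state $(x,i)$, $\gcd\{n\ge1:\mathbb{P}_{(x,i)}(Z_n=(x,i))>0\}=1$), and with finite exponential moments ($\sum_x e^{\alpha\|x\|}\mu_{i,j}(x)<\infty$ for all $i,j$, $\alpha>0$). The Fourier transform is the $p\times p$ complex matrix $\widehat\mu(\theta)_{i,j}=\sum_{x\in\mathbb{Z}^d}e^{\mathbf{i}x\cdot\theta}\mu_{i,j}(x)$, $\theta\in\mathbb{R}^d$. *)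

(* Defs.v *)
From HB Require Import structures.
From mathcomp Require Import all_boot all_order all_algebra.
From mathcomp.real_closed Require Import complex.
From mathcomp Require Import all_classical all_reals.
From mathcomp Require Import ereal topology normedtype sequences numfun esum exp trigo.

Set Implicit Arguments.
Unset Strict Implicit.
Unset Printing Implicit Defensive.
Import Order.TTheory GRing.Theory Num.Theory.
Local Open Scope classical_set_scope.
Local Open Scope ring_scope.

Section MAP.
Variables (R : realType) (d p : nat).

(* Z^d is 'rV[int]_d ; the jump matrix is mu : 'I_p -> 'I_p -> Z^d -> R,
   mu i j x = P_{(0,i)}((A_1,M_1) = (x,j)). *)
Definition Zd := 'rV[int]_d.

Definition zdot (x : Zd) (theta : 'rV[R]_d) : R :=
  \sum_(k < d) (x ord0 k)%:~R * theta ord0 k.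
Definition znorm (x : Zd) : R := \sum_(k < d) `|x ord0 k|%:~R.

Definition zsum (f : Zd -> R) : R :=
  fine (\esum_(x in [set: Zd]) ((EFin \o f)^\+ x))%E
  - fine (\esum_(x in [set: Zd]) ((EFin \o f)^\- x))%E.

Variable mu : 'I_p -> 'I_p -> Zd -> R.

Fixpoint mu_pow (n : nat) : 'I_p -> 'I_p -> Zd -> \bar R :=
  match n with
  | 0 => fun i j x => if (i == j) && (x == 0) then 1%E else 0%E
  | n.+1 => fun i j y =>
      (\sum_(k < p) \esum_(z in [set: Zd]) (mu_pow n i k z * (mu k j (y - z))%:E))%E
  end.

(* P_s(Z_n = t) for states s = (x,i), t = (y,j) of the Markov-additive chain *)
Definition trans (n : nat) (s t : Zd * 'I_p) : \bar R :=
  mu_pow n s.2 t.2 (t.1 - s.1).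

Definition is_MAP_kernel : Prop :=
  (forall i j x, 0 <= mu i j x) /\
  (forall i, (\sum_(j < p) \esum_(x in [set: Zd]) (mu i j x)%:E)%E = 1%E).

Definition irreducible : Prop :=
  forall s t : Zd * 'I_p, exists n, (0 < trans n s t)%E.

(* gcd {n >= 1 : P_s(Z_n = s) > 0} = 1 for every state s, i.e. 1 is the only
   common divisor of that set *)
Definition aperiodic : Prop :=
  forall (s : Zd * 'I_p) (k : nat),
    (forall n : nat, (0 < n)%N -> (0 < trans n s s)%E -> (k %| n)%N) -> k = 1%N.

Definition finite_exp_moments : Prop :=
  forall i j (alpha : R), 0 < alpha ->
    (\esum_(x in [set: Zd]) (expR (alpha * znorm x) * mu i j x)%:E < +oo)%E.

Definition fourier (theta : 'rV[R]_d) : 'M[R[i]]_p :=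
  \matrix_(i < p, j < p)
    Complex (zsum (fun x => mu i j x * cos (zdot x theta)))
            (zsum (fun x => mu i j x * sin (zdot x theta))).

End MAP.

Definition spectral_radius (R : realType) (p : nat) (A : 'M[R[i]]_p) : R :=
  sup [set ComplexField.Normc.normc l | l in [set l : R[i] | eigenvalue A l]].

(* Main.v *)
Require Import Defs.
From HB Require Import structures.
From mathcomp Require Import all_boot all_order all_algebra.
From mathcomp.real_closed Require Import complex.
From mathcomp Require Import all_classical all_reals.
From mathcomp Require Import ereal topology normedtype sequences numfun esum exp trigo.
From mathcomp Require Import ring lra.
Import Order.TTheory GRing.Theory Num.Theory.
Local Open Scope ring_scope.

Set Implicit Arguments.
Unset Strict Implicit.
Unset Printing Implicit Defensive.

Section PartT1.

Section ES.
Variables (R : realType) (T : choiceType).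
Local Open Scope ereal_scope.

Lemma esumZr (c : R) (g : T -> R) : (0 <= c)%R ->
  \esum_(x in [set: T]) (c * g x)%:E = c%:E * \esum_(x in [set: T]) (g x)%:E.
Proof.
move=> c0; rewrite /esum -ereal_supZl//; last first.
  apply/set0P; exists 0; exists set0; [exact: fsets_set0|by rewrite fsbig_set0].
congr ereal_sup; apply/seteqP; split=> y /=.
  move=> [A [finA _] <-]; exists (\sum_(x \in A) (g x)%:E); first by exists A.
  by rewrite !fsumEFin// -EFinM mulr_fsumr.
move=> [_ [A [finA _] <-] <-]; exists A => //.
by rewrite !fsumEFin// -EFinM mulr_fsumr.
Qed.

Lemma esum_gt0P (a : T -> \bar R) : 0 < \esum_(x in [set: T]) a x -> exists x, 0 < a x.
Proof.
apply: contraPP => /forallNP H; apply/negP; rewrite -leNgt.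
apply: ge_ereal_sup => _ [A _ <-]; apply: fsume_le0 => t _.
by rewrite leNgt; apply/negP => /H.
Qed.

Lemma esum_ge1 (a : T -> \bar R) (t : T) : (forall x, 0 <= a x) ->
  a t <= \esum_(x in [set: T]) a x.
Proof.
move=> a0; apply: esum_ge; exists [set t]%classic; first by split => //; exact: finite_set1.
by rewrite fsbig_set1.
Qed.
End ES.

End PartT1.

Section PartT2.

Section ZS.
Variables (R : realType) (d : nat).
Local Notation Z := (Zd d).

Definition summ (f : Z -> R) := (\esum_(x in [set: Z]) (`|f x|)%:E < +oo)%E.
Definition NN (g : Z -> R) : R := fine (\esum_(x in [set: Z]) (g x)%:E).

Lemma summ_fin (g : Z -> R) : (forall x, 0 <= g x) -> summ g ->
  \esum_(x in [set: Z]) (g x)%:E \is a fin_num.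
Proof.
move=> g0; rewrite /summ (eq_esum (b := fun x => (g x)%:E)); last first.
  by move=> x _; rewrite ger0_norm.
move=> lt; rewrite fin_numElt lt andbT (lt_le_trans (ltNyr 0))//.
by apply: esum_ge0 => x _; rewrite lee_fin.
Qed.

Lemma summ_le (f g : Z -> R) : (forall x, `|f x| <= `|g x|) -> summ g -> summ f.
Proof.
move=> fg; apply: le_lt_trans; apply: le_esum => x _; rewrite lee_fin; exact: fg.
Qed.

Lemma summD (f g : Z -> R) : summ f -> summ g -> summ (fun x => f x + g x).
Proof.
move=> sf sg; rewrite /summ.
apply: (@le_lt_trans _ _ (\esum_(x in [set: Z]) ((`|f x|)%:E + (`|g x|)%:E))%E).
  by apply: le_esum => x _; rewrite -EFinD lee_fin ler_normD.
by rewrite esumD// ?lte_add_pinfty// => x _; rewrite lee_fin.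
Qed.

Lemma summZ (c : R) (f : Z -> R) : summ f -> summ (fun x => c * f x).
Proof.
move=> sf; rewrite /summ.
rewrite (eq_esum (b := fun x => (`|c| * `|f x|)%:E)); last first.
  by move=> x _; rewrite normrM.
rewrite esumZr//.
have /fineK <- : \esum_(x in [set: Z]) (`|f x|)%:E \is a fin_num.
  by apply: (summ_fin (g := fun x => `|f x|)) => //; rewrite /summ; under eq_esum do rewrite normr_id.
by rewrite -EFinM ltry.
Qed.

Lemma NN_ge0 (g : Z -> R) : (forall x, 0 <= g x) -> 0 <= NN g.
Proof. by move=> g0; apply: fine_ge0; apply: esum_ge0 => x _; rewrite lee_fin. Qed.

Lemma NND (g h : Z -> R) : (forall x, 0 <= g x) -> (forall x, 0 <= h x) ->
  summ g -> summ h -> NN (fun x => g x + h x) = NN g + NN h.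
Proof.
move=> g0 h0 sg sh; rewrite /NN (eq_esum (b := fun x => ((g x)%:E + (h x)%:E)%E)); last first.
  by move=> x _; rewrite EFinD.
by rewrite esumD ?fineD ?summ_fin// => x _; rewrite lee_fin.
Qed.

Lemma NNZ (c : R) (g : Z -> R) : 0 <= c -> (forall x, 0 <= g x) ->
  summ g -> NN (fun x => c * g x) = c * NN g.
Proof.
move=> c0 g0 sg; rewrite /NN esumZr//.
have /fineK <- := summ_fin g0 sg.
by rewrite -EFinM.
Qed.

Lemma NN_single (g : Z -> R) x : (forall x, 0 <= g x) -> summ g -> g x <= NN g.
Proof.
move=> g0 sg; rewrite /NN -lee_fin fineK ?summ_fin//.
by apply: (esum_ge1 (a := fun x => (g x)%:E)) => y; rewrite lee_fin.
Qed.

Lemma NN_eq0 (g : Z -> R) : (forall x, 0 <= g x) -> summ g -> NN g = 0 ->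
  forall x, g x = 0.
Proof.
move=> g0 sg N0 x; apply/eqP; rewrite eq_le g0 andbT -N0; exact: NN_single.
Qed.

Lemma fine4 (a b c e : \bar R) : a \is a fin_num -> b \is a fin_num ->
  c \is a fin_num -> e \is a fin_num -> (a - b = c - e)%E ->
  fine a - fine b = fine c - fine e.
Proof.
move=> /fineK <- /fineK <- /fineK <- /fineK <-; rewrite -!EFinB => -[->].
by [].
Qed.

Lemma KL (f g h : Z -> R) : (forall x, f x = g x - h x) ->
  (forall x, 0 <= g x) -> (forall x, 0 <= h x) -> summ g -> summ h ->
  zsum f = NN g - NN h.
Proof.
move=> fE g0 h0 sg sh.
have sf : summ f.
  apply: (summ_le (g := fun x => g x + h x)); last exact: summD.
  move=> x; rewrite fE (ger0_norm (addr_ge0 (g0 x) (h0 x))).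
  by rewrite (le_trans (ler_normB _ _))// !ger0_norm.
have sG : summable [set: Z] (EFin \o g) by [].
have sH : summable [set: Z] (EFin \o h) by [].
have sF : summable [set: Z] (EFin \o f) by [].
have E : EFin \o f = ((EFin \o g) \- (EFin \o h))%E.
  by apply: funext => x /=; rewrite fE EFinB.
have := esumB sG sH (fun x _ => g0 x) (fun x _ => h0 x).
rewrite -E => eq.
rewrite /zsum /NN; apply: fine4 => //; last 2 first.
- exact: summ_fin.
- exact: summ_fin.
- have := summable_funepos sF; rewrite summableE.
  by rewrite (eq_esum (b := fun x => ((EFin \o f)^\+ x)%E))// => x _; rewrite gee0_abs// funepos_ge0.
- have := summable_funeneg sF; rewrite summableE.
  by rewrite (eq_esum (b := fun x => ((EFin \o f)^\- x)%E))// => x _; rewrite gee0_abs// funeneg_ge0.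
Qed.

Definition fpos (f : Z -> R) x := if 0 <= f x then f x else 0.
Definition fneg (f : Z -> R) x := if 0 <= f x then 0 else - f x.

Lemma fpos_ge0 f x : 0 <= fpos f x.
Proof. by rewrite /fpos; case: ifP. Qed.
Lemma fneg_ge0 f x : 0 <= fneg f x.
Proof. by rewrite /fneg; case: ifPn => // h; rewrite oppr_ge0 ltW// ltNge. Qed.
Lemma fposneg f x : f x = fpos f x - fneg f x.
Proof. by rewrite /fpos /fneg; case: ifP => _; rewrite ?subr0 ?sub0r ?opprK. Qed.
Lemma summ_fpos f : summ f -> summ (fpos f).
Proof.
apply: summ_le => x; rewrite /fpos; case: ifP => _; by rewrite ?normr0.
Qed.
Lemma summ_fneg f : summ f -> summ (fneg f).
Proof.
apply: summ_le => x; rewrite /fneg; case: ifP => _; by rewrite ?normr0 ?normrN.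
Qed.

Lemma NN0 : NN (fun _ : Z => 0) = 0.
Proof. by rewrite /NN esum1. Qed.

Lemma summ0 : summ (fun _ : Z => 0).
Proof. by rewrite /summ esum1// => x _; rewrite normr0. Qed.

Lemma zsum_nonneg (g : Z -> R) : (forall x, 0 <= g x) -> summ g -> zsum g = NN g.
Proof.
move=> g0 sg; rewrite (@KL g g (fun _ => 0)) ?NN0 ?subr0// ?summ0// => x.
by rewrite subr0.
Qed.

Lemma zsum_pn f : summ f -> zsum f = NN (fpos f) - NN (fneg f).
Proof.
move=> sf; apply: KL; [exact: fposneg|exact: fpos_ge0|exact: fneg_ge0|
  exact: summ_fpos|exact: summ_fneg].
Qed.

Lemma zsumZ (c : R) (f : Z -> R) : summ f -> zsum (fun x => c * f x) = c * zsum f.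
Proof.
move=> sf; rewrite (zsum_pn sf).
have sp := summ_fpos sf; have sn := summ_fneg sf.
have p0 := fpos_ge0 f; have n0 := fneg_ge0 f.
case: (leP 0 c) => c0.
  rewrite (@KL _ (fun x => c * fpos f x) (fun x => c * fneg f x)).
  - by rewrite (NNZ c0 p0 sp) (NNZ c0 n0 sn) mulrBr.
  - by move=> x; rewrite fposneg mulrBr.
  - by move=> x; rewrite mulr_ge0// fpos_ge0.
  - by move=> x; rewrite mulr_ge0// fneg_ge0.
  - exact: summZ.
  - exact: summZ.
have c0' : 0 <= - c by rewrite oppr_ge0 ltW.
rewrite (@KL _ (fun x => - c * fneg f x) (fun x => - c * fpos f x)).
- rewrite (NNZ c0' p0 sp) (NNZ c0' n0 sn).
  by rewrite !mulNr opprK addrC mulrBr.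
- by move=> x; rewrite (fposneg f x); ring.
- by move=> x; rewrite mulr_ge0// fneg_ge0.
- by move=> x; rewrite mulr_ge0// fpos_ge0.
- exact: summZ.
- exact: summZ.
Qed.

Lemma zsumD (f g : Z -> R) : summ f -> summ g ->
  zsum (fun x => f x + g x) = zsum f + zsum g.
Proof.
move=> sf sg; rewrite (zsum_pn sf) (zsum_pn sg).
have pf := fpos_ge0 f; have nf := fneg_ge0 f.
have pg := fpos_ge0 g; have ng := fneg_ge0 g.
have spf := summ_fpos sf; have snf := summ_fneg sf.
have spg := summ_fpos sg; have sng := summ_fneg sg.
rewrite (@KL _ (fun x => fpos f x + fpos g x) (fun x => fneg f x + fneg g x)).
- rewrite (NND pf pg spf spg) (NND nf ng snf sng).
  by rewrite opprD !addrA; congr (_ + _); rewrite -!addrA; congr (_ + _); rewrite addrC.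
- by move=> x; rewrite (fposneg f) (fposneg g) opprD !addrA; congr (_ + _); 
     rewrite -!addrA; congr (_ + _); rewrite addrC.
- by move=> x; rewrite addr_ge0// fpos_ge0.
- by move=> x; rewrite addr_ge0// fneg_ge0.
- by apply: summD; exact: summ_fpos.
- by apply: summD; exact: summ_fneg.
Qed.
End ZS.

End PartT2.

Section PartT3.
Local Open Scope complex_scope.

Local Notation nc := ComplexField.Normc.normc.
Local Notation cRe := (@complex.Re _).
Local Notation cIm := (@complex.Im _).

Section CX.
Variable R : realType.
Implicit Types z w : R[i].

Lemma nc_ge0 z : 0 <= nc z.
Proof. by case: z => a b /=; exact: sqrtr_ge0. Qed.

Lemma nc_sqr z : nc z ^+ 2 = cRe z ^+ 2 + cIm z ^+ 2.
Proof. by case: z => a b /=; rewrite sqr_sqrtr// addr_ge0// sqr_ge0. Qed.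

Lemma Re_le_nc z : cRe z <= nc z.
Proof.
case: z => a b /=; apply: (le_trans (ler_norm a)).
by rewrite -sqrtr_sqr ler_wsqrtr// lerDl sqr_ge0.
Qed.

Lemma Re_eq_nc z : cRe z = nc z -> z = (nc z)%:C.
Proof.
move=> h; have := nc_sqr z; rewrite -h => /eqP.
rewrite -subr_eq0 (_ : _ - _ = - cIm z ^+ 2); last by ring.
rewrite oppr_eq0 sqrf_eq0 => /eqP hb.
by case: z h hb => a b /= h ->.
Qed.

Lemma nc_conj z : nc (conjc z) = nc z.
Proof. by case: z => a b /=; rewrite sqrrN. Qed.

Lemma conj_mul_self z : conjc z * z = (nc z ^+ 2)%:C.
Proof.
rewrite nc_sqr; case: z => a b /=; rewrite /GRing.mul /=.
by apply/eqP; rewrite eq_complex /=; apply/andP; split; apply/eqP; ring.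
Qed.

Lemma ncM z w : nc (z * w) = nc z * nc w.
Proof. exact: ComplexField.Normc.normcM. Qed.

Lemma nc_eq0 z : (nc z == 0) = (z == 0).
Proof.
apply/idP/idP => [/eqP/ComplexField.Normc.eq0_normc ->//|/eqP ->].
exact/eqP/ComplexField.Normc.normc0.
Qed.

Lemma nc_real (r : R) : 0 <= r -> nc r%:C = r.
Proof. by move=> r0 /=; rewrite expr0n /= addr0 sqrtr_sqr ger0_norm. Qed.

Lemma ReD z w : cRe (z + w) = cRe z + cRe w.
Proof. by case: z; case: w. Qed.

Lemma Re_sum (I : finType) (F : I -> R[i]) : cRe (\sum_i F i) = \sum_i cRe (F i).
Proof.
apply: (big_ind2 (fun a b => cRe a = b)) => //.
by move=> a b c e <- <-; rewrite ReD.
Qed.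

End CX.

Section EX.
Variables (R : realType) (d : nat) (theta : 'rV[R]_d).

Definition Ex (x : Zd d) : R[i] :=
  Complex (cos (zdot x theta)) (sin (zdot x theta)).

Lemma zdotD (x y : Zd d) : zdot (x + y) theta = zdot x theta + zdot y theta.
Proof.
rewrite /zdot -big_split /=; apply: eq_bigr => k _.
by rewrite !mxE intrD mulrDl.
Qed.

Lemma zdot0 : zdot (0 : Zd d) theta = 0.
Proof. by rewrite /zdot big1// => k _; rewrite mxE mul0r. Qed.

Lemma ExD x y : Ex (x + y) = Ex x * Ex y.
Proof.
rewrite /Ex zdotD cosD sinD.
by apply/eqP; rewrite eq_complex /= eqxx addrC eqxx.
Qed.

Lemma Ex0 : Ex 0 = 1.
Proof. by rewrite /Ex zdot0 cos0 sin0. Qed.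

Lemma nc_Ex x : nc (Ex x) = 1.
Proof. by rewrite /= cos2Dsin2 sqrtr1. Qed.

Lemma Re_mulEx c x :
  cRe (c * Ex x) = cRe c * cos (zdot x theta) - cIm c * sin (zdot x theta).
Proof. by case: c. Qed.
End EX.

Section MU.
Variables (R : realType) (d p : nat) (mu : 'I_p -> 'I_p -> Zd d -> R).
Local Open Scope ring_scope.

Lemma mu_summ (K : is_MAP_kernel mu) i j : summ (mu i j).
Proof.
case: K => m0 ms.
have e0 : forall j, (0 <= \esum_(x in [set: Zd d]) (mu i j x)%:E)%E.
  by move=> k; apply: esum_ge0 => x _; rewrite lee_fin.
have : (\esum_(x in [set: Zd d]) (mu i j x)%:E <= 1)%E.
  rewrite -(ms i) (bigD1 j)//= leeDl//.
  by apply: sume_ge0 => k _.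
move=> H; rewrite /summ (eq_esum (b := fun x => (mu i j x)%:E)); last first.
  by move=> x _; rewrite ger0_norm.
by apply: le_lt_trans H _; rewrite ltry.
Qed.

Lemma P_sum (K : is_MAP_kernel mu) i : \sum_j NN (mu i j) = 1.
Proof.
case: K => m0 ms; apply: EFin_inj; rewrite -sumEFin -(ms i).
apply: eq_bigr => j _; rewrite /NN fineK//.
apply: summ_fin => //; exact: mu_summ.
Qed.

Lemma summ_mucos (K : is_MAP_kernel mu) i j (t : 'rV[R]_d) :
  summ (fun x => mu i j x * cos (zdot x t)).
Proof.
apply: (summ_le (g := mu i j)); last exact: mu_summ.
move=> x; rewrite normrM ger0_norm ?K.1// ler_piMr// ?K.1//; exact: cos_max.
Qed.

Lemma summ_musin (K : is_MAP_kernel mu) i j (t : 'rV[R]_d) :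
  summ (fun x => mu i j x * sin (zdot x t)).
Proof.
apply: (summ_le (g := mu i j)); last exact: mu_summ.
move=> x; rewrite normrM ger0_norm ?K.1// ler_piMr// ?K.1//; exact: sin_max.
Qed.

Lemma Re_c_fourier (K : is_MAP_kernel mu) (t : 'rV[R]_d) (c : R[i]) i j :
  cRe (c * fourier mu t i j) = zsum (fun x => mu i j x * cRe (c * Ex t x)).
Proof.
rewrite (_ : (fun x => _) = fun x => cRe c * (mu i j x * cos (zdot x t)) +
     (- cIm c) * (mu i j x * sin (zdot x t))); last first.
  by apply: funext => x; rewrite Re_mulEx; ring.
rewrite zsumD; [|exact/summZ/summ_mucos|exact/summZ/summ_musin].
rewrite !zsumZ; [|exact: summ_musin|exact: summ_mucos].
by rewrite mxE; case: c => a b /=; ring.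
Qed.
End MU.

End PartT3.

Section PartT5.
Local Open Scope complex_scope.

Local Notation nc := ComplexField.Normc.normc.
Local Notation cRe := (@complex.Re _).
Local Notation cIm := (@complex.Im _).

Section CORE.
Variables (R : realType) (d p : nat) (mu : 'I_p -> 'I_p -> Zd d -> R).

Lemma summ_muRe (K : is_MAP_kernel mu) (t : 'rV[R]_d) (c : R[i]) i j :
  summ (fun x => mu i j x * cRe (c * Ex t x)).
Proof.
rewrite (_ : (fun x => _) = fun x => cRe c * (mu i j x * cos (zdot x t)) +
     (- cIm c) * (mu i j x * sin (zdot x t))); last first.
  by apply: funext => x; rewrite Re_mulEx; ring.
by apply: summD; apply: summZ; [exact: summ_mucos|exact: summ_musin].
Qed.

Lemma NN_g (K : is_MAP_kernel mu) (t : 'rV[R]_d) (c : R[i]) (m : R) i j :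
  (forall x, 0 <= mu i j x * (m - cRe (c * Ex t x))) ->
  NN (fun x => mu i j x * (m - cRe (c * Ex t x))) =
  m * NN (mu i j) - cRe (c * fourier mu t i j).
Proof.
move=> g0; rewrite -zsum_nonneg//; last first.
  rewrite (_ : (fun x => _) = fun x => m * mu i j x + (-1) * (mu i j x * cRe (c * Ex t x))).
    by apply: summD; apply: summZ; [exact: mu_summ|exact: summ_muRe].
  by apply: funext => x; ring.
rewrite (_ : (fun x => _) = fun x => m * mu i j x + (-1) * (mu i j x * cRe (c * Ex t x))); last first.
  by apply: funext => x; ring.
rewrite zsumD; [|exact/summZ/mu_summ|exact/summZ/summ_muRe].
rewrite !zsumZ; [|exact: summ_muRe|exact: mu_summ].
rewrite zsum_nonneg; [|exact: K.1|exact: mu_summ].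
by rewrite Re_c_fourier//; ring.
Qed.

Lemma realC_mul (a b : R) : (a * b)%:C = a%:C * b%:C :> R[i].
Proof. by rewrite rmorphM. Qed.

Lemma core (K : is_MAP_kernel mu) (t : 'rV[R]_d) (lam : R[i]) (v : 'rV[R[i]]_p) :
  v *m fourier mu t = lam *: v -> v != 0 -> 1 <= nc lam ->
  nc lam = 1 /\
  (forall i j y, v 0 i != 0 -> 0 < mu i j y ->
     v 0 j != 0 /\ (nc (v 0 j))%:C * v 0 i * Ex t y = (nc (v 0 i))%:C * lam * v 0 j).
Proof.
move=> eig vn0 lam1.
set A := fourier mu t.
pose V := fun i : 'I_p => (v 0 i : R[i]).
pose S j := \sum_i V i * A i j.
have SE j : S j = lam * V j.
  have := congr1 (fun M : 'M[R[i]]_(1,p) => M 0 j) eig; rewrite !mxE => <-.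
  by apply: eq_bigr => i _; rewrite !mxE.
pose P i j := NN (mu i j).
have P0 i j : 0 <= P i j by apply: NN_ge0 => x; exact: K.1.
pose c j i := conjc (S j) * V i.
have g0 j i x : 0 <= mu i j x * (nc (S j) * nc (V i) - cRe (c j i * Ex t x)).
  apply: mulr_ge0; first exact: K.1.
  rewrite subr_ge0; apply: le_trans (Re_le_nc _) _.
  by rewrite !ncM nc_Ex mulr1 nc_conj.
have Ng j i : NN (fun x => mu i j x * (nc (S j) * nc (V i) - cRe (c j i * Ex t x))) =
    nc (S j) * nc (V i) * P i j - cRe (c j i * A i j).
  exact: NN_g.
have sumNg j : \sum_i NN (fun x => mu i j x * (nc (S j) * nc (V i) - cRe (c j i * Ex t x))) =
    nc (S j) * ((\sum_i nc (V i) * P i j) - nc (S j)).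
  under eq_bigr do rewrite Ng.
  rewrite sumrB mulrBr mulr_sumr; congr (_ - _).
    by apply: eq_bigr => i _; rewrite mulrA.
  rewrite -Re_sum (_ : \sum_i _ = conjc (S j) * S j).
    by rewrite conj_mul_self /= expr2.
  by rewrite /S mulr_sumr; apply: eq_bigr => i _; rewrite /c mulrA.
have summ_g j i : summ (fun x => mu i j x * (nc (S j) * nc (V i) - cRe (c j i * Ex t x))).
  rewrite (_ : (fun x => _) = fun x => (nc (S j) * nc (V i)) * mu i j x +
     (-1) * (mu i j x * cRe (c j i * Ex t x))).
    by apply: summD; apply: summZ; [exact: mu_summ|exact: summ_muRe].
  by apply: funext => x; ring.
have Nge0 j i : 0 <= NN (fun x => mu i j x * (nc (S j) * nc (V i) - cRe (c j i * Ex t x))).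
  exact: NN_ge0.
have Dj j : nc (S j) <= \sum_i nc (V i) * P i j.
  have [S0|S0] := eqVneq (S j) 0.
    by rewrite S0 ComplexField.Normc.normc0; apply: sumr_ge0 => i _; rewrite mulr_ge0 ?nc_ge0.
  have : 0 <= nc (S j) * ((\sum_i nc (V i) * P i j) - nc (S j)).
    by rewrite -sumNg; apply: sumr_ge0 => i _.
  have pos : 0 < nc (S j) by rewrite lt_def nc_eq0 S0 nc_ge0.
  by rewrite pmulr_rge0// subr_ge0.
have tot : \sum_j ((\sum_i nc (V i) * P i j) - nc (S j)) = (1 - nc lam) * \sum_i nc (V i).
  rewrite sumrB exchange_big /= mulrBl mul1r; congr (_ - _).
    apply: eq_bigr => i _; rewrite -mulr_sumr.
    by rewrite (_ : \sum_j P i j = 1) ?mulr1 //; exact: P_sum.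
  by rewrite mulr_sumr; apply: eq_bigr => j _; rewrite SE ncM.
have [i0 vi0] : exists i, V i != 0.
  apply/existsP; move: vn0; apply: contraR; rewrite negb_exists => /forallP H.
  by apply/eqP/rowP => i; rewrite mxE; apply/eqP; move: (H i); rewrite negbK.
have sv : 0 < \sum_i nc (V i).
  rewrite (bigD1 i0)//= ltr_pwDl ?sumr_ge0// => [|i _]; last exact: nc_ge0.
  by rewrite lt_def nc_eq0 vi0 nc_ge0.
have tot0 : \sum_j ((\sum_i nc (V i) * P i j) - nc (S j)) = 0.
  apply/eqP; rewrite eq_le; apply/andP; split; last first.
    by apply: sumr_ge0 => j _; rewrite subr_ge0.
  by rewrite tot pmulr_lle0// subr_le0.
have lam_1 : nc lam = 1.
  move: tot0; rewrite tot => /eqP; rewrite mulf_eq0 (gt_eqF sv) orbF subr_eq0.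
  by move=> /eqP <-.
have Deq j : nc (S j) = \sum_i nc (V i) * P i j.
  apply/eqP; rewrite eq_sym -subr_eq0; apply/eqP.
  by apply: (psumr_eq0P _ tot0) => // k _; rewrite subr_ge0.
split => // i j y vi muy.
have Sj0 : S j != 0.
  apply/negP => /eqP S0; move: (Deq j); rewrite S0 ComplexField.Normc.normc0 => /esym.
  move=> E; have := psumr_eq0P (fun i _ => mulr_ge0 (nc_ge0 _) (P0 i j)) E (i := i) isT; move/eqP; rewrite mulf_eq0 nc_eq0 (negbTE vi) /=.
  have : 0 < P i j by apply: lt_le_trans muy _; apply: NN_single => //;
    [exact: K.1|exact: mu_summ].
  by move=> /gt_eqF ->.
have vj : V j != 0 by move: Sj0; rewrite SE mulf_eq0 negb_or => /andP[].
split => //.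
have sum0 : \sum_i NN (fun x => mu i j x * (nc (S j) * nc (V i) - cRe (c j i * Ex t x))) = 0.
  by rewrite sumNg -Deq subrr mulr0.
have N0 : NN (fun x => mu i j x * (nc (S j) * nc (V i) - cRe (c j i * Ex t x))) = 0.
  exact: (psumr_eq0P (fun i _ => Nge0 j i) sum0 (i := i) isT).
have gy := NN_eq0 (g0 j i) (summ_g j i) N0 y.
have hre : cRe (c j i * Ex t y) = nc (c j i * Ex t y).
  move: gy => /eqP; rewrite mulf_eq0 (gt_eqF muy) /= subr_eq0 => /eqP <-.
  by rewrite !ncM nc_Ex mulr1 nc_conj.
have z := Re_eq_nc hre.
rewrite !ncM nc_Ex mulr1 nc_conj in z.
have ncS : nc (S j) = nc (V j) by rewrite SE ncM lam_1 mul1r.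
have e1 : S j * (conjc (S j) * V i * Ex t y) =
    (nc (S j))%:C * ((nc (S j))%:C * V i * Ex t y).
  by rewrite !mulrA (mulrC (S j)) conj_mul_self expr2 realC_mul.
have key : (nc (S j))%:C * ((nc (S j))%:C * V i * Ex t y) =
    (nc (S j))%:C * ((nc (V i))%:C * lam * V j).
  have := congr1 (fun w => S j * w) z; rewrite /= /c e1 => ->.
  by rewrite SE realC_mul; ring.
have ncS0 : (nc (S j))%:C != 0 :> R[i].
  apply/eqP => /(congr1 (@complex.Re R)) /= /eqP; rewrite nc_eq0.
  exact/negP.
have := mulfI ncS0 key; rewrite ncS => ->.
by [].
Qed.
End CORE.

Section PATH.
Variables (R : realType) (d p : nat) (mu : 'I_p -> 'I_p -> Zd d -> R).
Local Open Scope ring_scope.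

Lemma mu_pow_ge0 (m0 : forall i j x, 0 <= mu i j x) n i j y : (0 <= mu_pow mu n i j y)%E.
Proof.
elim: n j y => [|n IH] j y /=; first by case: ifP.
apply: sume_ge0 => k _; apply: esum_ge0 => z _; apply: mule_ge0 => //.
by rewrite lee_fin.
Qed.

Lemma esum_sum_gt0 (F : 'I_p -> \bar R) : (0 < \sum_(k < p) F k)%E -> exists k, (0 < F k)%E.
Proof.
apply: contraPP => /forallNP H; apply/negP; rewrite -leNgt.
by apply: sume_le0 => k _; rewrite leNgt; apply/negP => /H.
Qed.

Lemma path_rel (m0 : forall i j x, 0 <= mu i j x) (t : 'rV[R]_d) (lam : R[i])
  (v : 'rV[R[i]]_p) i0 (vi0 : v 0 i0 != 0)
  (T : forall i j y, v 0 i != 0 -> 0 < mu i j y ->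
     v 0 j != 0 /\ (nc (v 0 j))%:C * v 0 i * Ex t y = (nc (v 0 i))%:C * lam * v 0 j) :
  forall n j y, (0 < mu_pow mu n i0 j y)%E ->
    v 0 j != 0 /\ (nc (v 0 j))%:C * v 0 i0 * Ex t y = (nc (v 0 i0))%:C * lam ^+ n * v 0 j.
Proof.
elim=> [|n IH] j y /=.
  case: ifP => [/andP[/eqP <- /eqP ->]|]; last by rewrite ltxx.
  by move=> _; rewrite Ex0 expr0 !mulr1.
move=> /esum_sum_gt0 [k] /esum_gt0P [z].
rewrite mule_ge0_gt0 ?mu_pow_ge0// ?lee_fin// lte_fin => /andP[hz hm].
have [vk IHk] := IH k z hz.
have [vj Tj] := T k j (y - z) vk hm.
split => //.
have nk0 : (nc (v 0 k))%:C != 0 :> R[i].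
  apply/eqP => /(congr1 (@complex.Re R)) /= /eqP; rewrite nc_eq0.
  exact/negP.
have -> : y = z + (y - z) by rewrite addrC subrK.
rewrite ExD; apply: (mulfI nk0).
have e : (nc (v 0 k))%:C * ((nc (v 0 j))%:C * v 0 i0 * (Ex t z * Ex t (y - z))) =
   ((nc (v 0 j))%:C * Ex t (y - z)) * ((nc (v 0 k))%:C * v 0 i0 * Ex t z) by ring.
rewrite e IHk.
have e2 : (nc (v 0 j))%:C * Ex t (y - z) * ((nc (v 0 i0))%:C * lam ^+ n * v 0 k) =
   (nc (v 0 i0))%:C * lam ^+ n * ((nc (v 0 j))%:C * v 0 k * Ex t (y - z)) by ring.
by rewrite e2 Tj exprS; ring.
Qed.
End PATH.

End PartT5.

Section PartT6.
Local Open Scope complex_scope.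

Local Notation nc := ComplexField.Normc.normc.

Lemma aper_pow (F : fieldType) (P : nat -> Prop) (l : F) :
  (forall n, (0 < n)%N -> P n -> l ^+ n = 1) ->
  (forall k, (forall n, (0 < n)%N -> P n -> (k %| n)%N) -> k = 1%N) -> l = 1.
Proof.
move=> ret aper.
case: (pselect (exists m, (0 < m)%N && (l ^+ m == 1))) => [ex|nex]; last first.
  have := aper 0%N => H; suff : 0%N = 1%N by [].
  apply: H => n n0 Pn; exfalso; apply: nex; exists n; rewrite n0 /=.
  by apply/eqP; exact: ret.
case: (ex_minnP ex) => k /andP[k0 /eqP lk] kmin.
have k1 : k = 1%N.
  apply: aper => n n0 Pn; have ln := ret n n0 Pn.
  have [r0|rn0] := eqVneq (n %% k)%N 0%N; first by apply/dvdnP; exists (n %/ k)%N; 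
    rewrite {1}(divn_eq n k) r0 addn0.
  have lr : l ^+ (n %% k) = 1.
    by move: ln; rewrite {1}(divn_eq n k) exprD mulnC exprM lk expr1n mul1r.
  have := kmin (n %% k)%N; rewrite lt0n rn0 lr eqxx => /(_ isT).
  by rewrite leqNgt ltn_pmod.
by move: lk; rewrite k1 expr1.
Qed.

Lemma cos_eq1 (R : realType) (x : R) : - pi <= x <= pi -> cos x = 1 -> x = 0.
Proof.
move=> /andP[h1 h2] cx.
have : `|x| = 0.
  apply: cos_inj; rewrite ?cos_norm ?cos0//; rewrite in_itv /= ?lexx ?pi_ge0//.
  by rewrite normr_ge0 /= ler_norml h1 h2.
by move/normr0_eq0.
Qed.

Section FINAL.
Variables (R : realType) (d p : nat) (mu : 'I_p -> 'I_p -> Zd d -> R).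

Lemma realC_neq0 (r : R) : r != 0 -> r%:C != 0 :> R[i].
Proof. by move=> r0; apply/eqP => /(congr1 (@complex.Re R)) /= /eqP; exact/negP. Qed.

Lemma eig_lt1 (K : is_MAP_kernel mu) (Irr : irreducible mu) (Aper : aperiodic mu)
  (theta : 'rV[R]_d) (hth : forall k : 'I_d, - pi <= theta ord0 k <= pi)
  (thn0 : theta != 0) (l : R[i]) :
  eigenvalue (fourier mu theta) l -> nc l < 1.
Proof.
move=> /eigenvalueP [v eig vn0].
rewrite ltNge; apply/negP => lam1.
have [lam_1 T] := core K eig vn0 lam1.
have [i0 vi0] : exists i, v 0 i != 0.
  apply/existsP; move: vn0; apply: contraR; rewrite negb_exists => /forallP H.
  by apply/eqP/rowP => i; rewrite mxE; apply/eqP; move: (H i); rewrite negbK.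
have PR := path_rel K.1 vi0 T.
have n0 : (nc (v 0 i0))%:C != 0 :> R[i] by apply: realC_neq0; rewrite nc_eq0.
have ret n : (0 < n)%N -> (0 < trans mu n ((0%R : Zd d), i0) ((0%R : Zd d), i0))%E -> l ^+ n = 1.
  move=> _; rewrite /trans /= subrr => /PR [_].
  rewrite Ex0 mulr1 -mulrA => /(mulfI n0) /esym /eqP.
  by rewrite -subr_eq0 -{2}(mul1r (v 0 i0)) -mulrBl mulf_eq0 (negbTE vi0) orbF subr_eq0 => /eqP.
have l1 : l = 1.
  apply: (aper_pow (P := fun n => (0 < trans mu n ((0%R : Zd d), i0) ((0%R : Zd d), i0))%E)) => //.
  by move=> k; apply: Aper.
move/negP: thn0; apply; apply/eqP/rowP => k; rewrite [RHS]mxE.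
pose ek : Zd d := \row_(m < d) ((m == k)%:Z).
have [n hn] := Irr ((0%R : Zd d), i0) (ek, i0).
move: hn; rewrite /trans /= subr0 => /PR [_].
rewrite l1 expr1n mulr1 => h.
have : v 0 i0 * Ex theta ek = v 0 i0 * 1.
  by apply: (mulfI n0); rewrite mulrA h mulr1.
move=> /(mulfI vi0) /(congr1 (@complex.Re R)) /= hc.
have zk : zdot ek theta = theta 0 k.
  rewrite /zdot (bigD1 k)//= big1 ?addr0 => [|m mk]; rewrite !mxE.
    by rewrite eqxx mul1r (_ : ord0 = 0).
  by rewrite (negbTE mk) mul0r.
rewrite zk in hc; apply: cos_eq1 => //.
Qed.
End FINAL.

Lemma seq_bound (R : realType) (s : seq R) : (forall x, x \in s -> x < 1) ->
  exists2 M, M < 1 & forall x, x \in s -> x <= M.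
Proof.
elim: s => [|a s IH] H; first by exists 0 => //; exact: ltr01.
have [M M1 HM] := IH (fun x xs => H x (@mem_behead _ (a :: s) x xs)).
have a1 := H a (mem_head a s).
case: (leP a M) => aM.
  by exists M => // x; rewrite in_cons => /orP[/eqP ->|/HM].
exists a => // x; rewrite in_cons => /orP[/eqP ->//|/HM xM].
exact: le_trans xM (ltW aM).
Qed.


End PartT6.

Local Notation nc := ComplexField.Normc.normc.
Unset Implicit Arguments.
Set Strict Implicit.

Theorem lemma2p1 (R : realType) (d p : nat) (hd : (1 <= d)%N) (hp : (1 <= p)%N)
  (mu : 'I_p -> 'I_p -> Zd d -> R) :
  is_MAP_kernel mu ->
  irreducible mu ->
  aperiodic mu ->
  finite_exp_moments mu ->
  forall theta : 'rV[R]_d,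
    (forall k : 'I_d, - pi <= theta ord0 k <= pi) ->
    theta != 0 ->
    spectral_radius (fourier mu theta) < 1.
Proof.
move=> K Irr Aper _ theta hth thn0.
set A := fourier mu theta.
have [rs hrs] := closed_field_poly_normal (char_poly A).
have eigin l : eigenvalue A l -> l \in rs.
  rewrite eigenvalue_root_char hrs (monicP (char_poly_monic A)) scale1r.
  by rewrite root_prod_XsubC.
have [M M1 HM] : exists2 M, M < 1 & forall x, x \in [seq nc l | l <- rs & eigenvalue A l] -> x <= M.
  apply: seq_bound => x /mapP [l]; rewrite mem_filter => /andP[el _] ->.
  exact: (eig_lt1 K Irr Aper hth thn0).
rewrite /spectral_radius.
set E := [set _ | _ in _]%classic.
have [E0|/set0P [y Ey]] := eqVneq E set0.
  by rewrite E0 sup0 ltr01.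
apply: le_lt_trans M1; apply: ge_sup; first by exists y.
move=> _ [l el <-]; apply: HM; apply/mapP; exists l => //.
by rewrite mem_filter el eigin.
Qed.
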